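(* In the multi-user imperfect-prediction setting below, let $\phi_I^*=\min_{\lambda\ge0}g_I(\lambda)$ and $\phi_0^*=\min_{\lambda\ge0}g_0(\lambda)$, let $\lambda_0^*$ be a minimizer of $g_0^l$ and $\lambda_I^*$ a minimizer of $g_I^l$ over $\lambda\ge0$. Then $$g_I^l(\lambda_I^* )-g_0^u(\lambda_I^* )\le\phi_I^*-\phi_0^*\le g_I^u(\lambda_0^* )-g_0^l(\lambda_0^* ).$$
   Context: $N$ users; $B>0$; $a_{\max}>0$. User $n$ has arrival rate $a_n\ge0$, true-positive rate $p_n$ and false-negative rate $q_n$ with $0\le q_n<p_n\le1$ and $q_n\le a_n/a_{\max}\le p_n$, $\tilde a_n=\frac{a_n-a_{\max}q_n}{p_n-q_n}$, a probability vector $\boldsymbol\eta_n$ on its channel states, $\beta_n\ge0$, integers $\tau_n\ge1$, $D_n\ge1$, a Markov channel on $\{1,\dots,K_n\}$ with transition matrix $(P_n^{i,j})$, a finite $\mathcal E\subset[0,\infty)$ containing $0$ and a positive element, and $\zeta_n(i,\cdot):\mathcal E\to[0,1]$ with $\zeta_n(i,0)=0$, $\zeta_n(i,e)>0$ for $e>0$, strictly increasing; states totally ordered by $\zeta_n$ (for all $i,j$ either $\zeta_n(i,e)\ge\zeta_n(j,e)\ \forall e$ or $\le\ \forall e$) with extremal states $i_n^{\max},i_n^{\min}$. For $\lambda\ge0$ (all functions depend on $\lambda$; maxima over $e\in\mathcal E$): $V_n^l(0)=0$, $V_n^l(\tau)=\max_{e>0}\frac{1-[1-\zeta_n(i_n^{\min},e)]^{\tau}}{\zeta_n(i_n^{\min},e)}[-\lambda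 e+\zeta_n(i_n^{\min},e)\beta_n]$; $V_n^u(0)=0$, $V_n^u(\tau)=\sum_{z=1}^{\tau}\max_{e}\{-\lambda e+\zeta_n(i_n^{\max},e)(\beta_n-\max\{0,V_n^l(z-1)\})\}$; for $\tau_n\le\tau\le\tau_n+D_n$, $\tilde V_n^l(\tau)=\max_{e>0}\{-(1-p_n)\frac{1-[1-\zeta_n(i_n^{\min},e)]^{\tau-\tau_n}}{\zeta_n(i_n^{\min},e)}\lambda e+p_n\frac{1-[1-\zeta_n(i_n^{\min},e)]^{\tau}}{\zeta_n(i_n^{\min},e)}[-\lambda e+\zeta_n(i_n^{\min},e)\beta_n]\}$ and $\tilde V_n^u(\tau)=\sum_{z=\tau_n+1}^{\tau}\max_e\{-\lambda e+\zeta_n(i_n^{\max},e)(p_n\beta_n-\max\{0,\tilde V_n^l(\tau_n),\tilde V_n^l(z-1)\})\}+p_n\sum_{z=1}^{\tau_n}\max_e\{-\lambda e+\zeta_n(i_n^{\max},e)(\beta_n-\max\{0,V_n^l(z-1)\})\}$. The imperfect-prediction value function: $V_n^I(0,0,i)=0$; $V_n^I(0,\tau,i)=\max_e\{-\lambda e+\zeta_n(i,e)\beta_n+(1-\zeta_n(i,e))\sum_jP_n^{i,j}V_n^I(0,\tau-1,j)\}$ for $1\le\tau\le\tau_n$; $V_n^I(0,\tau_n+1,i)=\max_e\{-\lambda e+\zeta_n(i,e)p_n\beta_n+p_n(1-\zeta_n(i,e))\sum_jP_n^{i,j}V_n^I(0,\tau_n,j)\}$; $V_n^I(0,\tau,i)=\max_e\{-\lambda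 e+\zeta_n(i,e)p_n\beta_n+(1-\zeta_n(i,e))\sum_jP_n^{i,j}V_n^I(0,\tau-1,j)\}$ for $\tau_n+2\le\tau\le\tau_n+D_n$. Define $g_I(\lambda)=\lambda B+\sum_n[\tilde a_n\sum_i\eta_n^iV_n^I(0,\tau_n+D_n,i)+(a_{\max}-\tilde a_n)q_n\sum_i\eta_n^iV_n^I(0,\tau_n,i)]$, $g_I^u(\lambda)=\lambda B+\sum_n\{\tilde a_n\min[p_n\beta_n,\tilde V_n^u(\tau_n+D_n)]+(a_{\max}-\tilde a_n)q_n\min[\beta_n,V_n^u(\tau_n)]\}$, $g_I^l(\lambda)=\lambda B+\sum_n\{\tilde a_n\max[0,\tilde V_n^l(\tau_n),\tilde V_n^l(\tau_n+D_n)]+(a_{\max}-\tilde a_n)q_n\max[0,V_n^l(\tau_n)]\}$. No-prediction functions: $g_0(\lambda)=\lambda B+\sum_n a_n\sum_i\eta_n^iV_n^I(0,\tau_n,i)$, $g_0^u(\lambda)=\lambda B+\sum_n a_n\min\{\beta_n,V_n^u(\tau_n)\}$, $g_0^l(\lambda)=\lambda B+\sum_n a_n\max\{0,V_n^l(\tau_n)\}$. $g_I$, $g_0$ are the Lagrange dual functions with imperfect prediction and without prediction; $\phi_I^*,\phi_0^*$ the optimal weighted timely-throughputs. *)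

(* Defs.v *)
(* the statement is purely order-theoretic/algebraic (finite
   maxima, finite sums, powers, division), so it is stated over an arbitrary
   real field R : realFieldType (the paper's setting is R = the reals). *)
From HB Require Import structures.
From mathcomp Require Import all_boot all_order all_algebra.
Set Implicit Arguments. Unset Strict Implicit. Unset Printing Implicit Defensive.
Import Order.TTheory GRing.Theory Num.Theory.
Local Open Scope ring_scope.

(* Data of one user n. Channel states are 'I_(u_K u) (i.e. {1..K_n} shifted). *)
Record user (R : realFieldType) := User {
  u_K : nat;
  u_zeta : 'I_u_K -> R -> R;
  u_P : 'I_u_K -> 'I_u_K -> R;
  u_eta : 'I_u_K -> R;
  u_imax : 'I_u_K;
  u_imin : 'I_u_K;
  u_a : R; u_p : R; u_q : R; u_beta : R;
  u_tau : nat; u_D : nat }.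
Arguments u_K {R} u.
Arguments u_zeta {R} u _ _.
Arguments u_P {R} u _ _.
Arguments u_eta {R} u _.
Arguments u_imax {R} u.
Arguments u_imin {R} u.
Arguments u_a {R} u.
Arguments u_p {R} u.
Arguments u_q {R} u.
Arguments u_beta {R} u.
Arguments u_tau {R} u.
Arguments u_D {R} u.

Section Defs.
Variable R : realFieldType.
Variable E : seq R.

(* max over e in E (E assumed nonempty; the seed is an element of E) *)
Definition maxE (f : R -> R) : R := \big[Order.max/f (head 0 E)]_(e <- E) f e.
Definition maxpos (f : R -> R) : R :=
  let Ep := [seq e <- E | 0 < e] in \big[Order.max/f (head 0 Ep)]_(e <- Ep) f e.

Variable lam : R.
Variable u : user R.

Definition zmin (e : R) := u_zeta u (u_imin u) e.
Definition zmax (e : R) := u_zeta u (u_imax u) e.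

Definition Vl (t : nat) : R :=
  if t is 0 then 0 else
  maxpos (fun e => (1 - (1 - zmin e) ^+ t) / zmin e * (- (lam * e) + zmin e * u_beta u)).

Definition Vu (t : nat) : R :=
  \sum_(1 <= z < t.+1)
     maxE (fun e => - (lam * e) + zmax e * (u_beta u - Order.max 0 (Vl z.-1))).

(* \tilde V_n^l, used for tau_n <= t <= tau_n + D_n *)
Definition tVl (t : nat) : R :=
  maxpos (fun e =>
    - ((1 - u_p u) * ((1 - (1 - zmin e) ^+ (t - u_tau u)) / zmin e) * (lam * e))
    + u_p u * ((1 - (1 - zmin e) ^+ t) / zmin e) * (- (lam * e) + zmin e * u_beta u)).

Definition tVu (t : nat) : R :=
  \sum_(u_tau u + 1 <= z < t.+1)
     maxE (fun e => - (lam * e) + zmax e *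
        (u_p u * u_beta u - Order.max 0 (Order.max (tVl (u_tau u)) (tVl z.-1))))
  + u_p u * \sum_(1 <= z < (u_tau u).+1)
     maxE (fun e => - (lam * e) + zmax e * (u_beta u - Order.max 0 (Vl z.-1))).

Fixpoint VI (t : nat) : 'I_(u_K u) -> R :=
  match t with
  | 0 => fun _ => 0
  | t'.+1 => fun i =>
     let ev := \sum_(j : 'I_(u_K u)) u_P u i j * VI t' j in
     let z e := u_zeta u i e in
     if (t'.+1 <= u_tau u)%N then
       maxE (fun e => - (lam * e) + z e * u_beta u + (1 - z e) * ev)
     else if t' == u_tau u then
       maxE (fun e => - (lam * e) + z e * u_p u * u_beta u + u_p u * (1 - z e) * ev)
     else
       maxE (fun e => - (lam * e) + z e * u_p u * u_beta u + (1 - z e) * ev)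
  end.

Definition EVI (t : nat) : R := \sum_(i : 'I_(u_K u)) u_eta u i * VI t i.

End Defs.

Section G.
Variable R : realFieldType.
Variables (E : seq R) (B amax : R) (N : nat) (us : 'I_N -> user R).

Definition ta (u : user R) : R := (u_a u - amax * u_q u) / (u_p u - u_q u).

Definition gI (lam : R) : R := lam * B + \sum_(n < N)
  (ta (us n) * EVI E lam (us n) (u_tau (us n) + u_D (us n))
   + (amax - ta (us n)) * u_q (us n) * EVI E lam (us n) (u_tau (us n))).

Definition gIu (lam : R) : R := lam * B + \sum_(n < N)
  (ta (us n) * Order.min (u_p (us n) * u_beta (us n))
                         (tVu E lam (us n) (u_tau (us n) + u_D (us n)))
   + (amax - ta (us n)) * u_q (us n)
       * Order.min (u_beta (us n)) (Vu E lam (us n) (u_tau (us n)))).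

Definition gIl (lam : R) : R := lam * B + \sum_(n < N)
  (ta (us n) * Order.max 0 (Order.max (tVl E lam (us n) (u_tau (us n)))
                                      (tVl E lam (us n) (u_tau (us n) + u_D (us n))))
   + (amax - ta (us n)) * u_q (us n)
       * Order.max 0 (Vl E lam (us n) (u_tau (us n)))).

Definition g0 (lam : R) : R := lam * B + \sum_(n < N)
  u_a (us n) * EVI E lam (us n) (u_tau (us n)).

Definition g0u (lam : R) : R := lam * B + \sum_(n < N)
  u_a (us n) * Order.min (u_beta (us n)) (Vu E lam (us n) (u_tau (us n))).

Definition g0l (lam : R) : R := lam * B + \sum_(n < N)
  u_a (us n) * Order.max 0 (Vl E lam (us n) (u_tau (us n))).
End G.

Definition user_ok (R : realFieldType) (E : seq R) (amax : R) (u : user R) : Prop :=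
  (0 <= u_a u /\ 0 <= u_q u /\ u_q u < u_p u /\ u_p u <= 1 /\
   u_q u <= u_a u / amax /\ u_a u / amax <= u_p u /\ 0 <= u_beta u /\
   (0 < u_tau u)%N /\ (0 < u_D u)%N) /\
  ((forall i, 0 <= u_eta u i) /\ \sum_i u_eta u i = 1) /\
  ((forall i j, 0 <= u_P u i j) /\ (forall i, \sum_j u_P u i j = 1)) /\
  (forall i e, e \in E -> 0 <= u_zeta u i e <= 1) /\
  (forall i, u_zeta u i 0 = 0) /\
  (forall i e, e \in E -> 0 < e -> 0 < u_zeta u i e) /\
  (forall i e e', e \in E -> e' \in E -> e < e' -> u_zeta u i e < u_zeta u i e') /\
  (forall i j, (forall e, e \in E -> u_zeta u j e <= u_zeta u i e) \/
               (forall e, e \in E -> u_zeta u i e <= u_zeta u j e)) /\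
  (forall j e, e \in E -> u_zeta u j e <= u_zeta u (u_imax u) e) /\
  (forall j e, e \in E -> u_zeta u (u_imin u) e <= u_zeta u j e).

(* Main.v *)
Require Import Defs.
From HB Require Import structures.
From mathcomp Require Import all_boot all_order all_algebra.
From mathcomp Require Import ring lra.
Import Order.TTheory GRing.Theory Num.Theory.
Set Implicit Arguments. Unset Strict Implicit. Unset Printing Implicit Defensive.
Local Open Scope ring_scope.

Section Gen.
Variable R : realFieldType.

Lemma bigmax_seq_le (s : seq R) (f : R -> R) x0 X :
  x0 <= X -> (forall e, e \in s -> f e <= X) -> \big[Order.max/x0]_(e <- s) f e <= X.
Proof.
move=> h0; elim: s => [|a s IH] H; first by rewrite big_nil.
rewrite big_cons ge_max H ?mem_head //= IH // => e he; apply: H.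
by rewrite inE he orbT.
Qed.

Lemma bigmax_seq_ge (s : seq R) (f : R -> R) x0 e :
  e \in s -> f e <= \big[Order.max/x0]_(e <- s) f e.
Proof.
elim: s => [|a s IH] //; rewrite inE big_cons le_max => /orP[/eqP->|h].
  by rewrite lexx.
by rewrite IH ?orbT.
Qed.

Lemma maxE_le (E : seq R) f X : (0 \in E) -> (forall e, e \in E -> f e <= X) -> maxE E f <= X.
Proof.
move=> h0 H; apply: bigmax_seq_le => //.
by case: E h0 H => //= a s _ H; apply: H; exact: mem_head.
Qed.

Lemma maxE_ge (E : seq R) f e : e \in E -> f e <= maxE E f.
Proof. exact: bigmax_seq_ge. Qed.

Lemma maxpos_le (E : seq R) f X : (exists2 e, e \in E & 0 < e) ->
  (forall e, e \in E -> 0 < e -> f e <= X) -> maxpos E f <= X.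
Proof.
move=> [e1 he1 pe1] H; rewrite /maxpos; apply: bigmax_seq_le.
  have : has (fun e => 0 < e) E by apply/hasP; exists e1.
  rewrite has_filter; case Ef: [seq e <- E | 0 < e] => [|a s] //= _.
  have : a \in [seq e <- E | 0 < e] by rewrite Ef mem_head.
  by rewrite mem_filter => /andP[pa ha]; apply: H.
by move=> e; rewrite mem_filter => /andP[pa ha]; apply: H.
Qed.

Lemma wavg_ge (K : nat) (w f : 'I_K -> R) a :
  (forall j, 0 <= w j) -> \sum_j w j = 1 -> (forall j, a <= f j) -> a <= \sum_j w j * f j.
Proof.
move=> w0 w1 H; have -> : a = \sum_j w j * a by rewrite -mulr_suml w1 mul1r.
by apply: ler_sum => j _; apply: ler_wpM2l.
Qed.

Lemma wavg_le (K : nat) (w f : 'I_K -> R) a :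
  (forall j, 0 <= w j) -> \sum_j w j = 1 -> (forall j, f j <= a) -> \sum_j w j * f j <= a.
Proof.
move=> w0 w1 H; have -> : a = \sum_j w j * a by rewrite -mulr_suml w1 mul1r.
by apply: ler_sum => j _; apply: ler_wpM2l.
Qed.

Definition S (k : nat) (m : R) := (1 - (1 - m) ^+ k) / m.

Lemma S0 m : S 0 m = 0.
Proof. by rewrite /S expr0 subrr mul0r. Qed.

Lemma SS k m : m != 0 -> S k.+1 m = 1 + (1 - m) * S k m.
Proof.
move=> hm; rewrite /S exprS; field; exact: hm.
Qed.

Lemma S_ge0 k m : 0 < m <= 1 -> 0 <= S k m.
Proof.
move=> /andP[m0 m1]; rewrite /S; apply: divr_ge0; last by lra.
have h1 : 0 <= 1 - m by lra.
have h2 : 1 - m <= 1 by lra.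
have := exprn_ile1 k h1 h2; lra.
Qed.

Lemma mS_le1 k m : 0 < m <= 1 -> 0 <= m * S k m <= 1.
Proof.
move=> /andP[m0 m1]; rewrite /S mulrC -mulrA mulVf ?gt_eqF // mulr1.
have h1 : 0 <= 1 - m by lra.
have h2 : 1 - m <= 1 by lra.
have := exprn_ge0 k h1; have := exprn_ile1 k h1 h2; lra.
Qed.

End Gen.

Section User.
Variable R : realFieldType.
Variables (E : seq R) (amax lam : R) (u : user R).
Hypothesis Hu : user_ok E amax u.
Hypothesis HE0 : 0 \in E.
Hypothesis HEpos : exists2 e, e \in E & 0 < e.
Hypothesis HEnn : forall e, e \in E -> 0 <= e.
Hypothesis Hlam : 0 <= lam.

Local Notation V := (@VI _ E lam u).
Local Notation z := (u_zeta u).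
Local Notation tau := (u_tau u).
Local Notation p := (u_p u).
Local Notation be := (u_beta u).
Local Notation EV t i := (\sum_(j : 'I_(u_K u)) u_P u i j * @VI _ E lam u t j).

Lemma VI_A t i : (t.+1 <= tau)%N ->
  V t.+1 i = maxE E (fun e => - (lam * e) + z i e * be + (1 - z i e) * EV t i).
Proof. by move=> h; rewrite /= h. Qed.

Lemma VI_B i : V tau.+1 i =
  maxE E (fun e => - (lam * e) + z i e * p * be + p * (1 - z i e) * EV tau i).
Proof. by rewrite /= ltnn eqxx. Qed.

Lemma VI_C t i : (tau < t)%N -> V t.+1 i =
  maxE E (fun e => - (lam * e) + z i e * p * be + (1 - z i e) * EV t i).
Proof.
move=> h; rewrite /= ltnNge ltnW //=.
by rewrite eq_sym (ltn_eqF h).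
Qed.

Lemma facts :
  [/\ 0 <= be, 0 < p, p <= 1, 0 <= u_q u & (0 < u_D u)%N].
Proof.
case: Hu => [[a0 [q0 [qp [p1 [qa [ap [b0 [t0 D0]]]]]]]] _].
split => //; lra.
Qed.

Lemma Pfacts : (forall i j, 0 <= u_P u i j) /\ (forall i, \sum_j u_P u i j = 1).
Proof. by case: Hu => _ [_ [h _]]. Qed.

Lemma etafacts : (forall i, 0 <= u_eta u i) /\ \sum_i u_eta u i = 1.
Proof. by case: Hu => _ [h _]. Qed.

Lemma zfacts i e : e \in E ->
  [/\ 0 <= z i e, z i e <= 1, zmin u e <= z i e, z i e <= zmax u e & 0 <= zmax u e].
Proof.
move=> he; case: Hu => _ [_ [_ [z01 [_ [_ [_ [_ [zM zm]]]]]]]].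
have /andP[h1 h2] := z01 i e he; have /andP[h3 h4] := z01 (u_imax u) e he.
by split => //; [exact: zm | exact: zM].
Qed.

Lemma zminpos e : e \in E -> 0 < e -> 0 < zmin u e <= 1.
Proof.
move=> he pe; case: Hu => _ [_ [_ [z01 [_ [zp _]]]]].
by rewrite zp //; have /andP[] := z01 (u_imin u) e he.
Qed.

Lemma z0 i : z i 0 = 0.
Proof. by case: Hu => _ [_ [_ [_ [h _]]]]. Qed.

Lemma EV_ge t i a : (forall j, a <= V t j) -> a <= EV t i.
Proof. by case: Pfacts => P0 P1 H; apply: wavg_ge. Qed.

Lemma EV_le t i a : (forall j, V t j <= a) -> EV t i <= a.
Proof. by case: Pfacts => P0 P1 H; apply: wavg_le. Qed.

Lemma le0e e : e \in E -> 0 <= lam * e.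
Proof. by move=> he; rewrite mulr_ge0 // HEnn. Qed.

Lemma L0 t : (t <= tau)%N -> forall i, 0 <= V t i <= be.
Proof.
have [b0 _ _ _ _] := facts.
elim: t => [|t IH] ht i; first by rewrite /= lexx.
have IH' := IH (ltnW ht).
have h1 : 0 <= EV t i by apply: EV_ge => j; have /andP[] := IH' j.
have h2 : EV t i <= be by apply: EV_le => j; have /andP[] := IH' j.
rewrite VI_A //; apply/andP; split.
  apply: (le_trans _ (@maxE_ge _ _ _ _ HE0)); rewrite z0; lra.
apply: maxE_le => // e he.
have [z1 z2 _ _ _] := zfacts i he; have := le0e he.
have : 0 <= (1 - z i e) * (be - EV t i) by apply: mulr_ge0; lra.
lra.
Qed.

Lemma L1 t : (t <= tau)%N -> forall e, e \in E -> 0 < e -> forall i,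
  S t (zmin u e) * (- (lam * e) + zmin u e * be) <= V t i.
Proof.
have [b0 _ _ _ _] := facts.
move=> + e he pe; have /andP[m0 m1] := zminpos he pe.
have Sg := S_ge0 _ (zminpos he pe); have mS := mS_le1 _ (zminpos he pe).
elim: t => [|t IH] ht i; first by rewrite S0 mul0r.
have IH' := IH (ltnW ht).
set L := S t (zmin u e) * _ in IH'.
have h1 : L <= EV t i by apply: EV_ge.
have hL : L <= be.
  have := mulr_ge0 (Sg t) (le0e he).
  have hmS : 0 <= 1 - zmin u e * S t (zmin u e) by have /andP[_ ?] := mS t; lra.
  have := mulr_ge0 hmS b0.
  rewrite /L; lra.
rewrite VI_A // SS ?gt_eqF //; apply: (le_trans _ (@maxE_ge _ _ _ _ he)).
have [z1 z2 z3 _ _] := zfacts i he.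
have : 0 <= (z i e - zmin u e) * (be - L) by apply: mulr_ge0; lra.
have : 0 <= (1 - z i e) * (EV t i - L) by apply: mulr_ge0; lra.
rewrite /L; lra.
Qed.


Lemma Vl_le t : (t <= tau)%N -> forall i, Vl E lam u t <= V t i.
Proof.
case: t => [|t] ht i; first by rewrite /= lexx.
by apply: maxpos_le => // e he pe; apply: (L1 ht he pe).
Qed.

Lemma L2 t : (t <= tau)%N -> forall i, V t i <= Vu E lam u t.
Proof.
have [b0 _ _ _ _] := facts.
elim: t => [|t IH] ht i; first by rewrite /= /Vu big_geq.
have IH' := IH (ltnW ht).
have h1 : EV t i <= Vu E lam u t by apply: EV_le.
have h2 : EV t i <= be by apply: EV_le => j; have /andP[] := L0 (ltnW ht) j.
have h3 : Order.max 0 (Vl E lam u t) <= EV t i.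
  rewrite ge_max; apply/andP; split; apply: EV_ge => j.
    by have /andP[] := L0 (ltnW ht) j.
  exact: Vl_le (ltnW ht) j.
rewrite VI_A // /Vu big_nat_recr //= -/(Vu E lam u t).
apply: maxE_le => // e he.
have hg : - (lam * e) + zmax u e * (be - Order.max 0 (Vl E lam u t)) <=
  maxE E (fun e => - (lam * e) + zmax u e * (be - Order.max 0 (Vl E lam u t))).
  exact: (@maxE_ge _ _ (fun e => - (lam * e) + zmax u e * (be - Order.max 0 (Vl E lam u t))) _ he).
have [z1 z2 z3 z4 z5] := zfacts i he.
have : 0 <= (zmax u e - z i e) * (be - EV t i) by apply: mulr_ge0; lra.
have : 0 <= zmax u e * (EV t i - Order.max 0 (Vl E lam u t)) by apply: mulr_ge0; lra.
lra.
Qed.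

Lemma gt_tau_ind (P : nat -> Prop) : P tau.+1 ->
  (forall t, (tau < t)%N -> P t -> P t.+1) -> forall t, (tau < t)%N -> P t.
Proof.
move=> P0 PS; elim=> [//|t IH]; rewrite ltnS leq_eqVlt => /orP[/eqP<-//|h].
exact: PS h (IH h).
Qed.

Lemma M0 t : (tau < t)%N -> forall i, 0 <= V t i <= p * be.
Proof.
have [b0 p0 p1 _ _] := facts.
move: t; apply: (gt_tau_ind (P := fun t => forall i, 0 <= V t i <= p * be)) => [|t ht IH] i.
  have h1 : 0 <= EV tau i by apply: EV_ge => j; have /andP[] := L0 (leqnn _) j.
  have h2 : EV tau i <= be by apply: EV_le => j; have /andP[] := L0 (leqnn _) j.
  rewrite VI_B; apply/andP; split.
    apply: (le_trans _ (@maxE_ge _ _ _ _ HE0)); rewrite z0.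
    have := mulr_ge0 (ltW p0) h1; lra.
  apply: maxE_le => // e he.
  have [z1 z2 _ _ _] := zfacts i he; have := le0e he.
  have : 0 <= p * ((1 - z i e) * (be - EV tau i)).
    by apply: mulr_ge0; [lra|apply: mulr_ge0; lra].
  lra.
have h1 : 0 <= EV t i by apply: EV_ge => j; have /andP[] := IH j.
have h2 : EV t i <= p * be by apply: EV_le => j; have /andP[] := IH j.
rewrite VI_C //; apply/andP; split.
  apply: (le_trans _ (@maxE_ge _ _ _ _ HE0)); rewrite z0; lra.
apply: maxE_le => // e he.
have [z1 z2 _ _ _] := zfacts i he; have := le0e he.
have : 0 <= (1 - z i e) * (p * be - EV t i) by apply: mulr_ge0; lra.
lra.
Qed.

Lemma Lle_be t e : e \in E -> 0 < e ->
  S t (zmin u e) * (- (lam * e) + zmin u e * be) <= be.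
Proof.
move=> he pe; have [b0 _ _ _ _] := facts.
have Sg := S_ge0 t (zminpos he pe); have /andP[_ mS] := mS_le1 t (zminpos he pe).
have := mulr_ge0 Sg (le0e he).
have hmS : 0 <= 1 - zmin u e * S t (zmin u e) by lra.
have := mulr_ge0 hmS b0.
lra.
Qed.

Lemma M1a t : (tau < t)%N -> forall e, e \in E -> 0 < e -> forall i,
  - ((1 - p) * S (tau - tau) (zmin u e) * (lam * e))
  + p * S tau (zmin u e) * (- (lam * e) + zmin u e * be) <= V t i.
Proof.
have [b0 p0 p1 _ _] := facts.
move=> ht e he pe; rewrite subnn S0 mulr0 mul0r oppr0 add0r.
have hL : forall i, S tau (zmin u e) * (- (lam * e) + zmin u e * be) <= EV tau i.
  by move=> i; apply: EV_ge => j; exact: (L1 (leqnn tau) he pe j).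
move: t ht; apply: (gt_tau_ind (P := fun t => forall i,
  p * S tau (zmin u e) * (- (lam * e) + zmin u e * be) <= V t i)) => [|t ht IH] i.
  rewrite VI_B; apply: (le_trans _ (@maxE_ge _ _ _ _ HE0)); rewrite z0.
  have := hL i; move=> h.
  have : 0 <= p * (EV tau i - S tau (zmin u e) * (- (lam * e) + zmin u e * be)).
    by apply: mulr_ge0; lra.
  lra.
rewrite VI_C //; apply: (le_trans _ (@maxE_ge _ _ _ _ HE0)); rewrite z0.
have := EV_ge i IH; lra.
Qed.


Lemma M1 t : (tau < t)%N -> forall e, e \in E -> 0 < e -> forall i,
  - ((1 - p) * S (t - tau) (zmin u e) * (lam * e))
  + p * S t (zmin u e) * (- (lam * e) + zmin u e * be) <= V t i.
Proof.
have [b0 p0 p1 _ _] := facts.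
move=> ht e he pe; have /andP[m0 m1] := zminpos he pe.
have mn0 : zmin u e != 0 by rewrite gt_eqF.
have le := le0e he.
move: t ht; apply: (gt_tau_ind (P := fun t => forall i,
  - ((1 - p) * S (t - tau) (zmin u e) * (lam * e))
  + p * S t (zmin u e) * (- (lam * e) + zmin u e * be) <= V t i)) => [|t ht IH] i.
  rewrite subSnn (SS 0 mn0) S0 mulr0 addr0 (SS tau mn0) VI_B.
  apply: (le_trans _ (@maxE_ge _ _ _ _ he)).
  have hL : S tau (zmin u e) * (- (lam * e) + zmin u e * be) <= EV tau i.
    by apply: EV_ge => j; exact: (L1 (leqnn tau) he pe j).
  have hb := Lle_be tau he pe.
  have [z1 z2 z3 _ _] := zfacts i he.
  have : 0 <= p * ((z i e - zmin u e) * (be - S tau (zmin u e) * (- (lam * e) + zmin u e * be))).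
    by apply: mulr_ge0; [lra|apply: mulr_ge0; lra].
  have : 0 <= p * ((1 - z i e) * (EV tau i - S tau (zmin u e) * (- (lam * e) + zmin u e * be))).
    by apply: mulr_ge0; [lra|apply: mulr_ge0; lra].
  lra.
have hE := EV_ge i IH.
rewrite (subSn (ltnW ht)) (SS (t - tau) mn0) (SS t mn0) VI_C //.
apply: (le_trans _ (@maxE_ge _ _ _ _ he)).
set S1 := S (t - tau) (zmin u e) in hE *.
set S2 := S t (zmin u e) in hE *.
have Sg1 : 0 <= S1 by exact: S_ge0 (zminpos he pe).
have Sg2 : 0 <= S2 by exact: S_ge0 (zminpos he pe).
have /andP[_ mS] : 0 <= zmin u e * S2 <= 1 by exact: mS_le1 (zminpos he pe).
have f1 : 0 <= (1 - p) * (S1 * (lam * e)) by apply: mulr_ge0; [lra|apply: mulr_ge0].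
have f2 : 0 <= p * (S2 * (lam * e)) by apply: mulr_ge0; [lra|apply: mulr_ge0].
have f3 : 0 <= p * ((1 - zmin u e * S2) * be) by apply: mulr_ge0; [lra|apply: mulr_ge0; lra].
have [z1 z2 z3 _ _] := zfacts i he.
have : 0 <= (z i e - zmin u e) * (p * be - (- ((1 - p) * S1 * (lam * e))
  + p * S2 * (- (lam * e) + zmin u e * be))) by apply: mulr_ge0; lra.
have : 0 <= (1 - z i e) * (EV t i - (- ((1 - p) * S1 * (lam * e))
  + p * S2 * (- (lam * e) + zmin u e * be))) by apply: mulr_ge0; lra.
lra.
Qed.

Lemma tVl_le t : (tau < t)%N -> forall i, tVl E lam u t <= V t i.
Proof. by move=> ht i; apply: maxpos_le => // e he pe; exact: (M1 ht he pe i). Qed.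

Lemma tVl0_le t : (tau < t)%N -> forall i, tVl E lam u tau <= V t i.
Proof. by move=> ht i; apply: maxpos_le => // e he pe; exact: (M1a ht he pe i). Qed.

Lemma tVl0_le' i : tVl E lam u tau <= p * EV tau i.
Proof.
have [b0 p0 p1 _ _] := facts.
apply: maxpos_le => // e he pe.
rewrite subnn.
change (- ((1 - p) * S 0 (zmin u e) * (lam * e))
  + p * S tau (zmin u e) * (- (lam * e) + zmin u e * be) <= p * EV tau i).
rewrite S0 mulr0 mul0r oppr0 add0r.
have hL : S tau (zmin u e) * (- (lam * e) + zmin u e * be) <= EV tau i.
  by apply: EV_ge => j; exact: (L1 (leqnn tau) he pe j).
have : 0 <= p * (EV tau i - S tau (zmin u e) * (- (lam * e) + zmin u e * be)).
  by apply: mulr_ge0; lra.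
lra.
Qed.

Lemma M2 t : (tau < t)%N -> forall i, V t i <= tVu E lam u t.
Proof.
have [b0 p0 p1 _ _] := facts.
move: t; apply: (gt_tau_ind (P := fun t => forall i, V t i <= tVu E lam u t)) => [|t ht IH] i.
  rewrite VI_B /tVu addn1 big_nat1.
  have h0 : 0 <= EV tau i by apply: EV_ge => j; have /andP[] := L0 (leqnn _) j.
  have h2 : EV tau i <= be by apply: EV_le => j; have /andP[] := L0 (leqnn _) j.
  have hVu : EV tau i <= Vu E lam u tau by apply: EV_le => j; exact: L2 (leqnn _) j.
  rewrite /Vu in hVu.
  have hM : Num.max 0 (Num.max (tVl E lam u tau) (tVl E lam u tau.+1.-1)) <= p * EV tau i.
    rewrite !ge_max (tVl0_le' i) andbT andbT.
    by apply: mulr_ge0 => //; lra.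
  apply: maxE_le => // e he.
  set G := maxE E _.
  have hg : - (lam * e) + zmax u e * (p * be -
        Num.max 0 (Num.max (tVl E lam u tau) (tVl E lam u tau.+1.-1))) <= G.
    exact: (@maxE_ge _ _ (fun e => - (lam * e) + zmax u e * (p * be -
        Num.max 0 (Num.max (tVl E lam u tau) (tVl E lam u tau.+1.-1)))) _ he).
  have [z1 z2 z3 z4 z5] := zfacts i he.
  have : 0 <= (zmax u e - z i e) * (p * (be - EV tau i)).
    by apply: mulr_ge0; [lra|apply: mulr_ge0; lra].
  have : 0 <= zmax u e * (p * EV tau i
     - Num.max 0 (Num.max (tVl E lam u tau) (tVl E lam u tau.+1.-1))) by apply: mulr_ge0; lra.
  have : 0 <= p * (\sum_(1 <= z < tau.+1) maxE E
          (fun e : R => - (lam * e) + zmax u e * (be - Num.max 0 (Vl E lam u z.-1))) - EV tau i).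
    by apply: mulr_ge0; lra.
  lra.
have hE : EV t i <= tVu E lam u t by apply: EV_le.
rewrite /tVu in hE.
have h0 : 0 <= EV t i by apply: EV_ge => j; have /andP[] := M0 ht j.
have h2 : EV t i <= p * be by apply: EV_le => j; have /andP[] := M0 ht j.
have hM : Num.max 0 (Num.max (tVl E lam u tau) (tVl E lam u t)) <= EV t i.
  rewrite !ge_max h0 /=; apply/andP; split; apply: EV_ge => j.
    exact: tVl0_le ht j.
  exact: tVl_le ht j.
rewrite VI_C // /tVu big_nat_recr /=; last by rewrite addn1 ltnS ltnW.
apply: maxE_le => // e he.
set G := maxE E (fun e => - (lam * e) + zmax u e * (p * be - Num.max 0 (Num.max (tVl E lam u tau) (tVl E lam u t)))).
have hg : - (lam * e) + zmax u e * (p * be -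
        Num.max 0 (Num.max (tVl E lam u tau) (tVl E lam u t))) <= G.
  exact: (@maxE_ge _ _ (fun e => - (lam * e) + zmax u e * (p * be -
        Num.max 0 (Num.max (tVl E lam u tau) (tVl E lam u t)))) _ he).
have [z1 z2 z3 z4 z5] := zfacts i he.
have : 0 <= (zmax u e - z i e) * (p * be - EV t i) by apply: mulr_ge0; lra.
have : 0 <= zmax u e * (EV t i
   - Num.max 0 (Num.max (tVl E lam u tau) (tVl E lam u t))) by apply: mulr_ge0; lra.
lra.
Qed.

Lemma EVI0 : Order.max 0 (Vl E lam u tau) <= EVI E lam u tau
          /\ EVI E lam u tau <= Order.min be (Vu E lam u tau).
Proof.
have [e0 e1] := etafacts.
split.
  rewrite ge_max; apply/andP; split; apply: wavg_ge => // j.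
    by have /andP[] := L0 (leqnn tau) j.
  exact: Vl_le (leqnn tau) j.
rewrite le_min; apply/andP; split; apply: wavg_le => // j.
  by have /andP[] := L0 (leqnn tau) j.
exact: L2 (leqnn tau) j.
Qed.

Lemma EVII : Order.max 0 (Order.max (tVl E lam u tau) (tVl E lam u (tau + u_D u)))
               <= EVI E lam u (tau + u_D u)
          /\ EVI E lam u (tau + u_D u) <= Order.min (p * be) (tVu E lam u (tau + u_D u)).
Proof.
have [e0 e1] := etafacts.
have [_ _ _ _ D0] := facts.
have ht : (tau < tau + u_D u)%N by rewrite -{1}(addn0 tau) ltn_add2l.
split.
  rewrite !ge_max; apply/and3P; split; apply: wavg_ge => // j.
  - by have /andP[] := M0 ht j.
  - exact: tVl0_le ht j.
  - exact: tVl_le ht j.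
rewrite le_min; apply/andP; split; apply: wavg_le => // j.
  by have /andP[] := M0 ht j.
exact: M2 ht j.
Qed.

End User.

Lemma coefs (R : realFieldType) (E : seq R) (amax : R) (u : user R) :
  0 < amax -> user_ok E amax u ->
  [/\ 0 <= u_a u, 0 <= ta amax u & 0 <= (amax - ta amax u) * u_q u].
Proof.
move=> Ha [[a0 [q0 [qp [p1 [qa [ap _]]]]]] _].
rewrite ler_pdivlMr // in qa; rewrite ler_pdivrMr // in ap.
have pq : 0 < u_p u - u_q u by lra.
split => //.
  by rewrite /ta divr_ge0 //; lra.
apply: mulr_ge0 => //; rewrite subr_ge0 /ta ler_pdivrMr //; lra.
Qed.

Lemma gbounds (R : realFieldType) (N : nat) (E : seq R) (B amax : R)
  (us : 'I_N -> user R) (Hamax : 0 < amax)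
  (HE0 : 0 \in E) (HEpos : exists2 e, e \in E & 0 < e)
  (HEnn : forall e, e \in E -> 0 <= e)
  (Hus : forall n, user_ok E amax (us n)) lam : 0 <= lam ->
  [/\ gIl E B amax us lam <= gI E B amax us lam,
      gI E B amax us lam <= gIu E B amax us lam,
      g0l E B us lam <= g0 E B us lam &
      g0 E B us lam <= g0u E B us lam].
Proof.
move=> hl; split; rewrite lerD2l; apply: ler_sum => n _;
  have [c1 c2 c3] := coefs Hamax (Hus n);
  have [h1 h2] := EVI0 (Hus n) HE0 HEpos HEnn hl;
  have [h3 h4] := EVII (Hus n) HE0 HEpos HEnn hl.
- by apply: lerD; apply: ler_wpM2l.
- by apply: lerD; apply: ler_wpM2l.
- by apply: ler_wpM2l.
- by apply: ler_wpM2l.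
Qed.

Theorem theorem10 (R : realFieldType) (N : nat) (E : seq R) (B amax : R)
  (us : 'I_N -> user R)
  (HB : 0 < B) (Hamax : 0 < amax)
  (HE0 : 0 \in E) (HEpos : exists2 e, e \in E & 0 < e)
  (HEnn : forall e, e \in E -> 0 <= e)
  (Hus : forall n, user_ok E amax (us n))
  (phiI phi0 lam0s lamIs : R)
  (HphiI : (exists2 l, 0 <= l & gI E B amax us l = phiI) /\
           (forall l, 0 <= l -> phiI <= gI E B amax us l))
  (Hphi0 : (exists2 l, 0 <= l & g0 E B us l = phi0) /\
           (forall l, 0 <= l -> phi0 <= g0 E B us l))
  (Hlam0 : 0 <= lam0s /\ forall l, 0 <= l -> g0l E B us lam0s <= g0l E B us l)
  (HlamI : 0 <= lamIs /\ forall l, 0 <= l -> gIl E B amax us lamIs <= gIl E B amax us l) :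
  gIl E B amax us lamIs - g0u E B us lamIs <= phiI - phi0 /\
  phiI - phi0 <= gIu E B amax us lam0s - g0l E B us lam0s.
Proof.
case: HphiI => [[lI hlI eI] mI]; case: Hphi0 => [[l0 hl0 e0] m0].
case: Hlam0 => [h0 m0l]; case: HlamI => [hI mIl].
have := gbounds B Hamax HE0 HEpos HEnn Hus hl0.
have := gbounds B Hamax HE0 HEpos HEnn Hus hlI.
have := gbounds B Hamax HE0 HEpos HEnn Hus h0.
have := gbounds B Hamax HE0 HEpos HEnn Hus hI.
case=> [a1 a2 a3 a4] [b1 b2 b3 b4] [c1 c2 c3 c4] [d1 d2 d3 d4].
have := mI _ h0; have := m0 _ hI; have := m0l _ hl0; have := mIl _ hlI.
split; lra.
Qed.
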